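(* For every $n\in\mathbb{N}$ and all words $A_1,A_2\in\mathsf{W}_\omega$ with $A_1\sim A_2$, we have $a_n(A_1)\sim a_n(A_2)$. Moreover, for all $n\in\mathbb{N}$, $A_1\in\mathsf{NF}$ and $A_2\in\mathsf{W}_\omega$ with $A_1\sim A_2$, we have $\Diamond_nA_1\sim a_n(A_2)$.
   Context: Words are finite strings over the alphabet $\mathbb{N}=\{0,1,2,\dots\}$; $\mathsf{W}_\omega$ is the set of all words, $\Lambda$ the empty word, $AB$ concatenation; $a_n\colon\mathsf{W}_\omega\to\mathsf{W}_\omega$ is $a_n(A)=An$. For $k\in\mathbb{N}$, $\mathsf{S}_k$ is the set of words all of whose symbols are $\ge k$. Given a linear preorder $\precsim$ with $A\sim B$ iff $A\precsim B\wedge B\precsim A$ and $A\prec B$ iff $A\precsim B\wedge\neg B\precsim A$, a finite sequence $(A_1,\dots,A_p)$ is lexicographically not greater than $(B_1,\dots,B_q)$ iff either $p\le q$ and $A_i\sim B_i$ for all $i\le p$, or there is $s<\min(p,q)$ with $A_i\sim B_i$ for $i\le s$ and $A_{s+1}\prec B_{s+1}$. A lexicographically maximal subsequence of a finite sequence is a subsequence that is lexicographically not less than every subsequence. The linear preorder $\precsim$ on $\mathsf{W}_\omega$ is defined by recursion on (largest symbol of $AB$) $-$ (smallest symbol of $AB$): $\Lambda\precsim\Lambda$; if $AB$ is nonempty with minimal symbol $n$, write uniquely $A=A_1n\cdots nA_k$, $B=B_1n\cdots nB_l$ ($k,l\ge1$) with $A_i,B_j\in\mathsf{S}_{n+1}$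 (possibly empty); let $C,D$ be lexicographically maximal subsequences of $(A_1,\dots,A_k)$, $(B_1,\dots,B_l)$; then $A\precsim B$ iff $C$ is lexicographically not greater than $D$. The set $\mathsf{NF}$: $\Lambda\in\mathsf{NF}$; a word with minimal symbol $n$, written $A_1n\cdots nA_k$ with $k\ge2$, $A_i\in\mathsf{S}_{n+1}$, is in $\mathsf{NF}$ iff $A_k\precsim\dots\precsim A_1$ and all $A_i\in\mathsf{NF}$. Every word is $\sim$-equivalent to exactly one word of $\mathsf{NF}$. For $A\in\mathsf{NF}$, $\Diamond_nA$ is the unique word of $\mathsf{NF}$ that is $\sim$-equivalent to $An$. *)

(* Defs.v *)
From mathcomp Require Import all_boot.
Set Implicit Arguments. Unset Strict Implicit. Unset Printing Implicit Defensive.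

Definition a_ (n : nat) (A : seq nat) : seq nat := rcons A n.

Definition minsym (s : seq nat) : nat := foldr minn (head 0 s) s.
Definition maxsym (s : seq nat) : nat := foldr maxn 0 s.

(* splitn n A = (A_1, ..., A_k) where A = A_1 n A_2 n ... n A_k and no A_i contains n *)
Definition splitn (n : nat) (A : seq nat) : seq (seq nat) :=
  foldr (fun x acc => if x == n then [::] :: acc
                      else match acc with
                           | h :: t => (x :: h) :: t
                           | [::] => [:: [:: x]]
                           end) [:: [::]] A.

Fixpoint lexle (le : seq nat -> seq nat -> Prop) (s t : seq (seq nat)) : Prop :=
  match s, t with
  | [::], _ => True
  | _ :: _, [::] => False
  | a :: s', b :: t' =>
      (le a b /\ ~ le b a) \/ (le a b /\ le b a /\ lexle le s' t')
  end.

Definition lexmax (le : seq nat -> seq nat -> Prop) (C s : seq (seq nat)) : Prop :=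
  subseq C s /\ forall S, subseq S s -> lexle le S C.

(* The recursive definition of the preorder, with fuel k; the recursion of the
   paper is on (max symbol - min symbol) of AB, which strictly decreases. *)
Fixpoint wle_f (k : nat) (A B : seq nat) : Prop :=
  match k with
  | 0 => True
  | k'.+1 =>
      if A ++ B is [::] then True else
      let n := minsym (A ++ B) in
      exists C D, lexmax (wle_f k') C (splitn n A) /\
                  lexmax (wle_f k') D (splitn n B) /\
                  lexle (wle_f k') C D
  end.

Definition wle (A B : seq nat) : Prop :=
  wle_f (maxsym (A ++ B) - minsym (A ++ B)).+1 A B.

Definition wsim (A B : seq nat) : Prop := wle A B /\ wle B A.

(* Normal forms, fuel = size of the word (components are strictly shorter). *)
Fixpoint NF_f (k : nat) (A : seq nat) : Prop :=
  match k with
  | 0 => A = [::]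
  | k'.+1 =>
      if A is [::] then True else
      let cs := splitn (minsym A) A in
      (forall i, i.+1 < size cs -> wle (nth [::] cs i.+1) (nth [::] cs i)) /\
      (forall X, X \in cs -> NF_f k' X)
  end.

Definition NF (A : seq nat) : Prop := NF_f (size A) A.

(* D is ◇_n A, i.e. the (unique) NF word that is ~-equivalent to A n *)
Definition is_diamond (n : nat) (A D : seq nat) : Prop :=
  NF D /\ wsim D (a_ n A).

(* Main.v *)
Require Import Defs.
From mathcomp Require Import all_boot.
From Stdlib Require Import Classical ClassicalEpsilon Lia.
From mathcomp Require Import zify.
Set Implicit Arguments. Unset Strict Implicit. Unset Printing Implicit Defensive.

Definition asb (p : Prop) : bool := if excluded_middle_informative p then true else false.
Lemma asbP p : reflect p (asb p).
Proof. rewrite /asb; case: excluded_middle_informative => h; constructor; done. Qed.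

Notation Rel := (seq nat -> seq nat -> Prop).
Definition reflP (R : Rel) (P : pred (seq nat)) := forall x, P x -> R x x.
Definition totP (R : Rel) (P : pred (seq nat)) := forall x y, P x -> P y -> R x y \/ R y x.
Definition transP (R : Rel) (P : pred (seq nat)) :=
  forall x y z, P x -> P y -> P z -> R x y -> R y z -> R x z.

Lemma all_subseq (P : pred (seq nat)) S s : subseq S s -> all P s -> all P S.
Proof. move=> /mem_subseq H /allP A; apply/allP => x /H; exact: A. Qed.

Lemma lexle_refl R P : reflP R P -> forall s, all P s -> lexle R s s.
Proof. move=> Hr; elim=> //= a s IH /andP[Pa Ps]; right; split; [|split]; auto. Qed.

Lemma lexle_trans R P : transP R P -> forall s t u, all P s -> all P t -> all P u ->
  lexle R s t -> lexle R t u -> lexle R s u.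
Proof.
move=> Ht; elim=> [|a s IH] [|b t] [|c u] //= /andP[Pa Ps] /andP[Pb Pt] /andP[Pc Pu].
case=> [[ab nba]|[ab [ba st]]] [[bc ncb]|[bc [cb tu]]].
- left; split; first exact: (Ht a b c).
  move=> ca; apply: ncb; exact: (Ht c a b).
- left; split; first exact: (Ht a b c).
  move=> ca; apply: nba; exact: (Ht b c a).
- left; split; first exact: (Ht a b c).
  move=> ca; apply: ncb; exact: (Ht c a b).
- right; split; first exact: (Ht a b c).
  split; first exact: (Ht c b a).
  exact: (IH t u).
Qed.

Lemma lexle_total R P : totP R P -> forall s t, all P s -> all P t ->
  lexle R s t \/ lexle R t s.
Proof.
move=> Ht; elim=> [|a s IH] [|b t] //=; try by auto.
move=> /andP[Pa Ps] /andP[Pb Pt].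
case: (classic (R a b)) => ab; case: (classic (R b a)) => ba.
- case: (IH t Ps Pt) => h; [left|right]; right; auto.
- by left; left.
- by right; left.
- by case: (Ht a b Pa Pb).
Qed.

Fixpoint eqv (R : Rel) (s t : seq (seq nat)) : Prop :=
  match s, t with
  | [::], [::] => True
  | a :: s', b :: t' => R a b /\ R b a /\ eqv R s' t'
  | _, _ => False
  end.

Lemma lexle_eqv R s t : lexle R s t -> lexle R t s -> eqv R s t.
Proof.
elim: s t => [|a s IH] [|b t] //=.
case=> [[ab nba]|[ab [ba st]]] [[ba' nab]|[ba' [ab' ts]]] //.
split; [|split]; auto.
Qed.

Lemma eqv_lexle R s t : eqv R s t -> lexle R s t.
Proof. elim: s t => [|a s IH] [|b t] //= [ab [ba e]]; right; auto. Qed.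

Lemma eqv_sym R s t : eqv R s t -> eqv R t s.
Proof. elim: s t => [|a s IH] [|b t] //= [ab [ba e]]; auto. Qed.

Lemma eqv_rcons R s t z z' : eqv R (rcons s z) (rcons t z') <-> eqv R s t /\ R z z' /\ R z' z.
Proof.
elim: s t => [|a s IH] [|b t] /=.
- tauto.
- case: t => [|? ?] /=; tauto.
- case: s {IH} => [|? ?] /=; tauto.
- rewrite IH; split.
  + by case=> ? [? [? [? ?]]].
  + by case=> [[? [? ?]] [? ?]].
Qed.

Definition F (R : Rel) z (L : seq (seq nat)) := filter (fun c => asb (R z c)) L.

Lemma eqv_F R P : transP R P -> forall L L' z z', all P L -> all P L' -> P z -> P z' ->
  eqv R L L' -> R z z' -> R z' z -> eqv R (F R z L) (F R z' L').
Proof.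
move=> Ht; elim=> [|a L IH] [|b L'] z z' //= /andP[Pa PL] /andP[Pb PL'] Pz Pz' [ab [ba e]] zz z'z.
have E : asb (R z a) = asb (R z' b).
  apply/asbP/asbP => h; [exact: (Ht z' z b) (Ht z a b _ _ _ h ab)|].
  exact: (Ht z z' a) (Ht z' b a _ _ _ h ba).
rewrite E; case: ifP => _ /=; last by auto.
split; [|split]; auto.
Qed.

Lemma F_F R P : transP R P -> forall L x y, all P L -> P x -> P y -> R x y ->
  F R y L = F R y (F R x L).
Proof.
move=> Ht; elim=> [|c L IH] x y //= /andP[Pc PL] Px Py xy.
case: (asbP (R x c)) => xc /=.
- case: ifP => _; [congr cons|]; exact: IH.
- case: (asbP (R y c)) => yc; first by case: xc; exact: (Ht x y c).
  exact: IH.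
Qed.

Fixpoint G (R : Rel) (s : seq (seq nat)) : seq (seq nat) :=
  match s with
  | [::] => [::]
  | x :: s' => if all (fun y => asb (R y x)) s' then x :: G R s' else G R s'
  end.

Lemma G_subseq R s : subseq (G R s) s.
Proof.
elim: s => //= x s IH; case: ifP => _; first by rewrite eqxx.
exact: subseq_trans IH (subseq_cons s x).
Qed.

Lemma G_rcons R s z : G R (rcons s z) = rcons (F R z (G R s)) z.
Proof.
elim: s => //= x s IH; rewrite all_rcons IH.
case Hz: (asb (R z x)); case Ha: (all _ s); by rewrite /= ?Hz.
Qed.

Lemma G_head R P : reflP R P -> totP R P -> transP R P -> forall s, all P s -> s != [::] ->
  exists g t, G R s = g :: t /\ P g /\ forall y, y \in s -> R y g.
Proof.
move=> Hr Hto Htr; elim=> //= x s IH /andP[Px Ps] _.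
case: ifP => Ha.
- exists x, (G R s); split; first done; split; first done.
  move=> y; rewrite inE => /orP[/eqP->|ys]; first exact: Hr.
  by move/allP: Ha => /(_ y ys) /asbP.
- have [w ws nw] : exists2 w, w \in s & ~~ asb (R w x) by apply/allPn; rewrite Ha.
  have sn : s != [::] by case: s ws {IH Ps Ha}.
  have [g [t [E [Pg H]]]] := IH Ps sn.
  exists g, t; split; first done; split; first done.
  move=> y; rewrite inE => /orP[/eqP->|ys]; last exact: H.
  have Pw : P w by move/allP: Ps; apply.
  have xw : R x w by case: (Hto x w Px Pw) => // h; move/asbP: nw.
  exact: (Htr x w g) (H w ws).
Qed.

Lemma G_lexmax R P : reflP R P -> totP R P -> transP R P -> forall s, all P s ->
  lexmax R (G R s) s.
Proof.
move=> Hr Hto Htr s Ps; split; first exact: G_subseq.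
elim: s Ps => [|x s IH] /=.
  by move=> _ [|].
move=> /andP[Px Ps] [|y S] //=.
have Ssub : forall y S, subseq (y :: S) s -> subseq S s.
  move=> y' S' h; exact: subseq_trans (subseq_cons S' y') h.
case Ha: (all _ s).
- case: (eqVneq y x) => [->|nyx].
  + rewrite ?eqxx => H; right; split; first exact: Hr; split; first exact: Hr.
    exact: IH.
  + move=> H.
    have ys : y \in s by apply: (mem_subseq H); rewrite inE eqxx.
    have yx : R y x by move/allP: Ha => /(_ y ys) /asbP.
    case: (classic (R x y)) => xy; [right; split; [|split] => //; apply: IH => //; exact: Ssub H|by left].
- case: (eqVneq y x) => [->|nyx2]; last by move=> H; exact: (IH Ps (y :: S) H).
  rewrite ?eqxx => H.
  have [w ws nw] : exists2 w, w \in s & ~~ asb (R w x) by apply/allPn; rewrite Ha.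
  have sn : s != [::] by case: s ws {IH Ps Ha H Ssub}.
  have [g [t [E [Pg Hg]]]] := G_head Hr Hto Htr Ps sn.
  rewrite E /=.
  have Pw : P w by move/allP: Ps; apply.
  have xw : R x w by case: (Hto x w Px Pw) => // h; move/asbP: nw.
  left; split; first exact: (Htr x w g) (Hg w ws).
  move=> gx; move/asbP: nw; apply; exact: (Htr w g x) (Hg w ws) gx.
Qed.

Lemma lexle_prefix R P : reflP R P -> forall s t, all P s -> lexle R s (s ++ t).
Proof. move=> Hr; elim=> //= a s IH t /andP[Pa Ps]; right; split; [|split]; auto. Qed.

Lemma F_mono R P : reflP R P -> totP R P -> transP R P -> forall L x y, all P L -> P x -> P y ->
  R x y -> lexle R (rcons (F R x L) x) (rcons (F R y L) y).
Proof.
move=> Hr Hto Htr; elim=> [|c L IH] x y /=.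
  move=> _ Px Py xy; case: (classic (R y x)) => yx; [right|left]; auto.
move=> /andP[Pc PL] Px Py xy.
case: (asbP (R y c)) => yc.
- have xc : R x c by exact: (Htr x y c).
  case: (asbP (R x c)) => // _ /=; right; split; first exact: Hr; split; first exact: Hr.
  exact: IH.
- case: (asbP (R x c)) => xc /=; last exact: IH.
  have cy : R c y by case: (Hto c y Pc Py) => // h.
  have [h [t [E [Ph yh]]]] : exists h t, rcons (F R y L) y = h :: t /\ P h /\ R y h.
    case E: (F R y L) => [|h t] /=; first by exists y, [::]; auto.
    have : h \in F R y L by rewrite E inE eqxx.
    rewrite mem_filter => /andP[/asbP yh hL]; exists h, (rcons t y); split; first done.
    split; last done. by move/allP: PL; apply.
  rewrite E; left; split; first exact: (Htr c y h).
  move=> hc; apply: yc; exact: (Htr y h c).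
Qed.

Definition inW m M (A : seq nat) := all (fun x => (m <= x) && (x <= M)) A.

Lemma inW_sub m M A B : {subset A <= B} -> inW m M B -> inW m M A.
Proof. move=> H /allP HB; apply/allP => x /H; exact: HB. Qed.

Lemma inW_rcons m M A n : inW m M A -> m <= n <= M -> inW m M (rcons A n).
Proof. by rewrite /inW all_rcons => -> ->. Qed.

Lemma inW_nil m M A : M < m -> inW m M A -> A = [::].
Proof.
case: A => // x A HM /= /andP[/andP[h1 h2] _]; exfalso.
have := leq_trans h1 h2; rewrite leqNgt HM //.
Qed.

Lemma foldr_minn_le x0 s y : y \in s -> foldr minn x0 s <= y.
Proof.
elim: s => //= a s IH; rewrite inE => /orP[/eqP->|ys]; first exact: geq_minl.
exact: leq_trans (geq_minr _ _) (IH ys).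
Qed.

Lemma foldr_minn_mem x0 s : foldr minn x0 s \in x0 :: s.
Proof.
elim: s => [|a s IH] /=; first by rewrite inE eqxx.
rewrite /minn; case: ifP => _; first by rewrite !inE eqxx orbT.
move: IH; rewrite !inE => /orP[->|->]; by rewrite ?orbT.
Qed.

Lemma minsym_le s y : y \in s -> minsym s <= y.
Proof. exact: foldr_minn_le. Qed.

Lemma minsym_mem s : s != [::] -> minsym s \in s.
Proof.
case: s => // x s _; rewrite /minsym /=.
have := foldr_minn_mem x (x :: s); rewrite /= inE => /orP[/eqP->|//].
by rewrite inE eqxx.
Qed.

Lemma maxsym_ge s y : y \in s -> y <= maxsym s.
Proof.
rewrite /maxsym; elim: s => //= a s IH; rewrite inE => /orP[/eqP->|ys]; first exact: leq_maxl.
exact: leq_trans (IH ys) (leq_maxr _ _).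
Qed.

Lemma inW_minmax s A : {subset A <= s} -> inW (minsym s) (maxsym s) A.
Proof.
move=> H; apply/allP => x /H xs; rewrite minsym_le // maxsym_ge //.
Qed.

Lemma splitn_cons n a A : splitn n (a :: A) =
  if a == n then [::] :: splitn n A
  else match splitn n A with h :: t => (a :: h) :: t | [::] => [:: [:: a]] end.
Proof. by []. Qed.

Lemma splitn_ne n A : exists h t, splitn n A = h :: t.
Proof.
elim: A => [|a A [h [t IH]]]; first by exists [::], [::].
rewrite splitn_cons IH; case: ifP => _; eauto.
Qed.

Lemma mem_splitn n A X y : X \in splitn n A -> y \in X -> (y \in A) && (y != n).
Proof.
elim: A X => [|a A IH] X /=; first by rewrite inE => /eqP->.
rewrite -/(splitn n A).
case: ifP => an.
  rewrite inE => /orP[/eqP->//|XA] yX.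
  by have /andP[h1 h2] := IH X XA yX; rewrite inE h1 h2 orbT.
have [h [t E]] := splitn_ne n A; rewrite E.
rewrite inE => /orP[/eqP->|XA].
  rewrite inE => /orP[/eqP->|yh]; first by rewrite inE eqxx an.
  have hh : h \in splitn n A by rewrite E inE eqxx.
  have /andP[h1 h2] := IH h hh yh; by rewrite inE h1 h2 orbT.
move=> yX; have hX : X \in splitn n A by rewrite E inE XA orbT.
have /andP[h1 h2] := IH X hX yX; by rewrite inE h1 h2 orbT.
Qed.

Lemma splitn_notin n A : n \notin A -> splitn n A = [:: A].
Proof.
elim: A => // a A IH; rewrite inE negb_or => /andP[na nA].
rewrite splitn_cons IH // eq_sym (negbTE na) //.
Qed.

Lemma splitn_rcons_eq n A : splitn n (rcons A n) = rcons (splitn n A) [::].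
Proof.
elim: A => [|a A IH]; first by rewrite /= eqxx.
rewrite rcons_cons !splitn_cons IH; case: ifP => // _.
by have [h [t ->]] := splitn_ne n A.
Qed.

Lemma splitn_rcons_neq n k A : k != n ->
  exists i x, splitn n A = rcons i x /\ splitn n (rcons A k) = rcons i (rcons x k).
Proof.
move=> kn; elim: A => [|a A [i [x [E1 E2]]]].
  by exists [::], [::]; rewrite /= (negbTE kn).
rewrite rcons_cons !splitn_cons E1 E2; case: ifP => _.
  by exists ([::] :: i), x.
case: i {E1 E2} => [|h t] /=; first by exists [::], (a :: x).
by exists ((a :: h) :: t), x.
Qed.

Lemma comps_inW m M A X : inW m M A -> X \in splitn m A -> inW m.+1 M X.
Proof.
move=> /allP HA XA; apply/allP => y yX.
have /andP[yA ym] := mem_splitn XA yX.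
have /andP[h1 ->] := HA y yA; rewrite andbT ltn_neqAle h1 eq_sym ym //.
Qed.

Lemma comps_all m M A : inW m M A -> all (inW m.+1 M) (splitn m A).
Proof. move=> H; apply/allP => X; exact: comps_inW. Qed.

Definition relEq (R1 R2 : Rel) (P : pred (seq nat)) :=
  forall x y, P x -> P y -> (R1 x y <-> R2 x y).

Lemma lexle_ext R1 R2 P : relEq R1 R2 P -> forall s t, all P s -> all P t ->
  (lexle R1 s t <-> lexle R2 s t).
Proof.
move=> H; elim=> [|a s IH] [|b t] //= /andP[Pa Ps] /andP[Pb Pt].
rewrite (H a b Pa Pb) (H b a Pb Pa) (IH t Ps Pt); tauto.
Qed.

Lemma lexmax_ext R1 R2 P : relEq R1 R2 P -> forall C s, all P s ->
  (lexmax R1 C s <-> lexmax R2 C s).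
Proof.
move=> H C s Ps; rewrite /lexmax; split; case=> sub HS; split=> // S SS.
- rewrite -(lexle_ext H (all_subseq SS Ps) (all_subseq sub Ps)); exact: HS.
- rewrite (lexle_ext H (all_subseq SS Ps) (all_subseq sub Ps)); exact: HS.
Qed.

Lemma wle_f_S k : forall m M A B, inW m M A -> inW m M B -> M < m + k ->
  (wle_f k A B <-> wle_f k.+1 A B).
Proof.
elim: k => [|k IH] m M A B HA HB HM.
  rewrite addn0 in HM; rewrite (inW_nil HM HA) (inW_nil HM HB) //.
rewrite [wle_f k.+1 A B]/= [wle_f k.+2 A B]/=.
case E: (A ++ B) => [|a l] //.
have ne : a :: l != [::] by [].
have nmem := minsym_mem ne.
have nle : forall y, y \in a :: l -> minsym (a :: l) <= y by move=> y; exact: minsym_le.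
set n := minsym (a :: l) in nmem nle *; clearbody n.
have nm : m <= n.
  move: nmem; rewrite -E mem_cat => /orP[/(allP HA)|/(allP HB)] /andP[] //.
have HAn : inW n M A.
  apply/allP => x xA; have /andP[_ ->] := allP HA x xA; rewrite andbT nle // -E mem_cat xA //.
have HBn : inW n M B.
  apply/allP => x xB; have /andP[_ ->] := allP HB x xB; rewrite andbT nle // -E mem_cat xB orbT //.
have Req : relEq (wle_f k) (wle_f k.+1) (inW n.+1 M).
  move=> X Y PX PY; apply: (IH n.+1 M) => //; lia.
have PA := comps_all HAn; have PB := comps_all HBn.
split; case=> C [D [h1 [h2 h3]]]; exists C, D.
- rewrite -!(lexmax_ext Req) //; split=> //; split=> //.
  rewrite -(lexle_ext Req) //; [exact: all_subseq (proj1 h1) PA | exact: all_subseq (proj1 h2) PB].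
- rewrite !(lexmax_ext Req) //; split=> //; split=> //.
  rewrite (lexle_ext Req) //; [exact: all_subseq (proj1 h1) PA | exact: all_subseq (proj1 h2) PB].
Qed.

Lemma wle_f_plus k j m M A B : inW m M A -> inW m M B -> M < m + k ->
  (wle_f k A B <-> wle_f (k + j) A B).
Proof.
move=> HA HB HM; elim: j => [|j IH]; first by rewrite addn0.
rewrite IH addnS; apply: (wle_f_S HA HB); lia.
Qed.

Lemma wleE k m M A B : inW m M A -> inW m M B -> M < m + k ->
  (wle_f k A B <-> wle A B).
Proof.
move=> HA HB HM; rewrite /wle.
set m0 := minsym (A ++ B); set M0 := maxsym (A ++ B).
have HA0 : inW m0 M0 A by apply: inW_minmax => x xA; rewrite mem_cat xA.
have HB0 : inW m0 M0 B by apply: inW_minmax => x xB; rewrite mem_cat xB orbT.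
set k0 := (M0 - m0).+1.
have HM0 : M0 < m0 + k0 by rewrite /k0; lia.
rewrite (wle_f_plus (maxn k k0 - k) HA HB HM) (wle_f_plus (maxn k k0 - k0) HA0 HB0 HM0).
have -> : k + (maxn k k0 - k) = maxn k k0 by lia.
have -> : k0 + (maxn k k0 - k0) = maxn k k0 by lia.
done.
Qed.

Lemma splitn_ne' n A : splitn n A != [::].
Proof. by have [h [t ->]] := splitn_ne n A. Qed.

Lemma wle_nil : wle [::] [::].
Proof. by []. Qed.

Lemma wle_unfold A B : A ++ B != [::] ->
  (wle A B <-> exists C D, lexmax wle C (splitn (minsym (A ++ B)) A) /\
     lexmax wle D (splitn (minsym (A ++ B)) B) /\ lexle wle C D).
Proof.
move=> ne; rewrite {1}/wle [wle_f _.+1 _ _]/=.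
have nmem := minsym_mem ne.
have HA0 : inW (minsym (A ++ B)) (maxsym (A ++ B)) A by apply: inW_minmax => x xA; rewrite mem_cat xA.
have HB0 : inW (minsym (A ++ B)) (maxsym (A ++ B)) B by apply: inW_minmax => x xB; rewrite mem_cat xB orbT.
have le0 : minsym (A ++ B) <= maxsym (A ++ B) by apply: maxsym_ge.
set m0 := minsym (A ++ B) in nmem HA0 HB0 le0 *; clearbody m0.
set M0 := maxsym (A ++ B) in HA0 HB0 le0 *; clearbody M0.
have Req : relEq (wle_f (M0 - m0)) wle (inW m0.+1 M0).
  move=> X Y PX PY; apply: (wleE PX PY); lia.
have PA := comps_all HA0; have PB := comps_all HB0.
move: ne; case E: (A ++ B) => [|a l] // _.
split; case=> C [D [h1 [h2 h3]]]; exists C, D.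
- rewrite -!(lexmax_ext Req) //; split=> //; split=> //.
  rewrite -(lexle_ext Req) //; [exact: all_subseq (proj1 h1) PA | exact: all_subseq (proj1 h2) PB].
- rewrite !(lexmax_ext Req) //; split=> //; split=> //.
  rewrite (lexle_ext Req) //; [exact: all_subseq (proj1 h1) PA | exact: all_subseq (proj1 h2) PB].
Qed.

Lemma lexmax1 (R : Rel) X : R X X -> forall C, (lexmax R C [:: X] <-> C = [:: X]).
Proof.
move=> RX C; split.
- case=> sub H; move: (H [:: X] (subseq_refl _)) sub.
  case: C {H} => [|Y [|Z C]] //=.
  + by move=> _; case: (eqVneq Y X) => [->|].
  + by move=> _; case: (eqVneq Y X).
- move=> ->; split; first exact: subseq_refl.
  case=> [|Y [|Z S]] //=.
  + case: (eqVneq Y X) => [->|] // _; right; tauto.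
  + by case: (Y == X).
Qed.

Lemma LL m M A B : reflP wle (inW m.+1 M) -> inW m M A -> inW m M B ->
  (wle A B <-> exists C D, lexmax wle C (splitn m A) /\ lexmax wle D (splitn m B) /\ lexle wle C D).
Proof.
move=> Hr HA HB.
case: (eqVneq (A ++ B) [::]) => [E|ne].
  have [EA EB] : A = [::] /\ B = [::] by case: A E {HA} => //; case: B {HB}.
  subst A B.
  have h := lexmax1 (Hr [::] isT).
  split=> _ //; exists [:: [::]], [:: [::]]; rewrite h; split=> //; split=> //=.
  by right; split; [|split].
have nmem := minsym_mem ne.
have nm : m <= minsym (A ++ B).
  move: nmem; rewrite mem_cat => /orP[/(allP HA)|/(allP HB)] /andP[] //.
case: (eqVneq (minsym (A ++ B)) m) => [E|nE].
  by rewrite (wle_unfold ne) E.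
have lt : m < minsym (A ++ B) by rewrite ltn_neqAle eq_sym nE nm.
have inA : forall x, x \in A -> m < x.
  move=> x xA; apply: leq_trans lt (minsym_le _); rewrite mem_cat xA //.
have inB : forall x, x \in B -> m < x.
  move=> x xB; apply: leq_trans lt (minsym_le _); rewrite mem_cat xB orbT //.
have HA1 : inW m.+1 M A.
  apply/allP => x xA; have /andP[_ ->] := allP HA x xA; rewrite andbT; exact: inA.
have HB1 : inW m.+1 M B.
  apply/allP => x xB; have /andP[_ ->] := allP HB x xB; rewrite andbT; exact: inB.
have nA : m \notin A by apply/negP => /inA; rewrite ltnn.
have nB : m \notin B by apply/negP => /inB; rewrite ltnn.
rewrite (splitn_notin nA) (splitn_notin nB).
split.
- move=> AB; exists [:: A], [:: B].
  rewrite (lexmax1 (Hr A HA1)) (lexmax1 (Hr B HB1)); split=> //; split=> //=.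
  case: (classic (wle B A)) => h; [right|left]; tauto.
- case=> C [D [h1 [h2 h3]]].
  move: h1 h2 h3; rewrite (lexmax1 (Hr A HA1)) (lexmax1 (Hr B HB1)) => -> -> /=.
  tauto.
Qed.

Definition Q m M := reflP wle (inW m M) /\ totP wle (inW m M) /\ transP wle (inW m M) /\
  (forall X, inW m M X -> wle [::] X).

Lemma LLG m M A B : Q m.+1 M -> inW m M A -> inW m M B ->
  (wle A B <-> lexle wle (G wle (splitn m A)) (G wle (splitn m B))).
Proof.
move=> [Hr [Hto [Htr _]]] HA HB.
have PA := comps_all HA; have PB := comps_all HB.
have GA := G_lexmax Hr Hto Htr PA; have GB := G_lexmax Hr Hto Htr PB.
have PGA : all (inW m.+1 M) (G wle (splitn m A)) := all_subseq (G_subseq _ _) PA.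
have PGB : all (inW m.+1 M) (G wle (splitn m B)) := all_subseq (G_subseq _ _) PB.
rewrite (LL Hr HA HB); split.
- case=> C [D [h1 [h2 h3]]].
  have PC := all_subseq (proj1 h1) PA; have PD := all_subseq (proj1 h2) PB.
  have e1 : lexle wle (G wle (splitn m A)) C := proj2 h1 _ (proj1 GA).
  have e2 : lexle wle D (G wle (splitn m B)) := proj2 GB _ (proj1 h2).
  exact: (lexle_trans Htr PGA PC PGB e1 (lexle_trans Htr PC PD PGB h3 e2)).
- move=> h; exists (G wle (splitn m A)), (G wle (splitn m B)); tauto.
Qed.

Lemma Q_step m M : Q m.+1 M -> Q m M.
Proof.
move=> Q1; have [Hr [Hto [Htr Hnil]]] := Q1.
have PG : forall A, inW m M A -> all (inW m.+1 M) (G wle (splitn m A)).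
  move=> A HA; exact: all_subseq (G_subseq _ _) (comps_all HA).
split; [|split; [|split]].
- move=> A HA; rewrite (LLG Q1 HA HA); exact: (lexle_refl Hr (PG A HA)).
- move=> A B HA HB; rewrite (LLG Q1 HA HB) (LLG Q1 HB HA); exact: (lexle_total Hto (PG A HA) (PG B HB)).
- move=> A B C HA HB HC; rewrite (LLG Q1 HA HB) (LLG Q1 HB HC) (LLG Q1 HA HC).
  exact: (lexle_trans Htr (PG A HA) (PG B HB) (PG C HC)).
- move=> X HX; have H0 : inW m M [::] by [].
  rewrite (LLG Q1 H0 HX).
  have [g [t [E [Pg _]]]] := G_head Hr Hto Htr (comps_all HX) (splitn_ne' m X).
  rewrite E /=.
  case: (classic (wle g [::])) => h; [right|left]; have := Hnil g Pg; tauto.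
Qed.

Lemma Q_all m M : Q m M.
Proof.
suff H : forall k m M, M < m + k -> Q m M by apply: (H M.+1); lia.
elim=> [|k IH] {}m {}M HM.
  rewrite addn0 in HM.
  have E := fun X => @inW_nil m M X HM.
  rewrite /Q /reflP /totP /transP; split; [|split; [|split]].
  - by move=> X /E ->.
  - by move=> X Y /E -> /E ->; left.
  - by move=> X Y Z /E -> /E -> /E ->.
  - by move=> X /E ->.
apply: Q_step; apply: IH; lia.
Qed.

Lemma F_id (R : Rel) z L : (forall c, c \in L -> R z c) -> F R z L = L.
Proof.
elim: L => //= c L IH H.
case: (asbP (R z c)) => h; last by case: h; apply: H; rewrite inE eqxx.
rewrite IH // => c' c'L; apply: H; rewrite inE c'L orbT //.
Qed.

Lemma T_all k : forall m M, M < m + k -> forall n A B, inW m M A -> inW m M B -> m <= n <= M ->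
  wle A (rcons A n) /\ (wsim A B -> wsim (rcons A n) (rcons B n)).
Proof.
elim: k => [|k IH] m M HM n A B HA HB Hn; first by lia.
have Q1 := Q_all m.+1 M; have [Hr [Hto [Htr Hnil]]] := Q1.
have HAn := inW_rcons HA Hn; have HBn := inW_rcons HB Hn.
have PGs : forall s, all (inW m.+1 M) s -> all (inW m.+1 M) (G wle s).
  move=> s Ps; exact: all_subseq (G_subseq _ _) Ps.
have PA := comps_all HA; have PB := comps_all HB.
rewrite /wsim (LLG Q1 HA HAn) (LLG Q1 HA HB) (LLG Q1 HB HA) (LLG Q1 HAn HBn) (LLG Q1 HBn HAn).
case: (eqVneq n m) => [E|nm].
- subst n; rewrite !splitn_rcons_eq !G_rcons.
  have GA := PGs _ PA; have GB := PGs _ PB.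
  rewrite !F_id; last 2 first.
  + move=> c cG; apply: Hnil; exact: (allP GB).
  + move=> c cG; apply: Hnil; exact: (allP GA).
  split; first by rewrite -cats1; exact: (lexle_prefix Hr).
  case=> h1 h2.
  have e : eqv wle (rcons (G wle (splitn m A)) [::]) (rcons (G wle (splitn m B)) [::]).
    by rewrite eqv_rcons; split; [exact: lexle_eqv|split; exact: wle_nil].
  split; [exact: eqv_lexle|exact: eqv_lexle (eqv_sym e)].
- have [iA [xA [EA EAn]]] := splitn_rcons_neq A nm.
  have [iB [xB [EB EBn]]] := splitn_rcons_neq B nm.
  rewrite EA EAn EB EBn !G_rcons.
  move: PA PB; rewrite EA EB !all_rcons => /andP[PxA PiA] /andP[PxB PiB].
  have Hn1 : m.+1 <= n <= M by move: Hn nm; lia.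
  have HM1 : M < m.+1 + k by lia.
  have [TA1 TA2] := IH m.+1 M HM1 n xA xB PxA PxB Hn1.
  have [TB1 _] := IH m.+1 M HM1 n xB xA PxB PxA Hn1.
  have PxAn := inW_rcons PxA Hn1; have PxBn := inW_rcons PxB Hn1.
  have LA := PGs _ PiA; have LB := PGs _ PiB.
  split; first exact: (F_mono Hr Hto Htr LA PxA PxAn TA1).
  case=> h1 h2; have e := lexle_eqv h1 h2.
  move: e; rewrite eqv_rcons => -[e [ab ba]].
  have [ab' ba'] := TA2 (conj ab ba).
  rewrite (F_F Htr LA PxA PxAn TA1) (F_F Htr LB PxB PxBn TB1).
  have PFA : all (inW m.+1 M) (F wle xA (G wle iA)) := all_subseq (filter_subseq _ _) LA.
  have PFB : all (inW m.+1 M) (F wle xB (G wle iB)) := all_subseq (filter_subseq _ _) LB.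
  have e2 := eqv_F Htr PFA PFB PxAn PxBn e ab' ba'.
  have e3 : eqv wle (rcons (F wle (rcons xA n) (F wle xA (G wle iA))) (rcons xA n))
                    (rcons (F wle (rcons xB n) (F wle xB (G wle iB))) (rcons xB n)).
    by rewrite eqv_rcons.
  split; [exact: eqv_lexle|exact: eqv_lexle (eqv_sym e3)].
Qed.

Theorem proposition1 :
  (forall (n : nat) (A1 A2 : seq nat), wsim A1 A2 -> wsim (a_ n A1) (a_ n A2)) /\
  (forall (n : nat) (A1 A2 : seq nat), NF A1 -> wsim A1 A2 ->
     forall D : seq nat, is_diamond n A1 D -> wsim D (a_ n A2)).
Proof.
have P1 : forall (n : nat) (A1 A2 : seq nat), wsim A1 A2 -> wsim (a_ n A1) (a_ n A2).
  move=> n A1 A2 h.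
  set M := maxsym (n :: A1 ++ A2).
  have W0 : forall X, {subset X <= n :: A1 ++ A2} -> inW 0 M X.
    move=> X sub; apply/allP => x /sub xs; rewrite leq0n /=; exact: maxsym_ge.
  have H1 : inW 0 M A1 by apply: W0 => x xA; rewrite inE mem_cat xA orbT.
  have H2 : inW 0 M A2 by apply: W0 => x xA; rewrite inE mem_cat xA !orbT.
  have Hn : 0 <= n <= M by rewrite leq0n /=; apply: maxsym_ge; rewrite inE eqxx.
  have HM : M < 0 + M.+1 by lia.
  exact: (proj2 (T_all HM H1 H2 Hn) h).
split; first exact: P1.
move=> n A1 A2 _ h D [_ [d1 d2]].
have [e1 e2] := P1 n A1 A2 h.
set M := maxsym (n :: D ++ A1 ++ A2).
have W0 : forall X, {subset X <= n :: D ++ A1 ++ A2} -> inW 0 M X.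
  move=> X sub; apply/allP => x /sub xs; rewrite leq0n /=; exact: maxsym_ge.
have Hn : n \in n :: D ++ A1 ++ A2 by rewrite inE eqxx.
have HD : inW 0 M D by apply: W0 => x xA; rewrite inE mem_cat xA orbT.
have H1 : inW 0 M (a_ n A1).
  apply: W0 => x; rewrite /a_ mem_rcons inE => /orP[/eqP->|xA]; [by rewrite inE eqxx|by rewrite inE !mem_cat xA !orbT].
have H2 : inW 0 M (a_ n A2).
  apply: W0 => x; rewrite /a_ mem_rcons inE => /orP[/eqP->|xA]; [by rewrite inE eqxx|by rewrite inE !mem_cat xA !orbT].
have [_ [_ [Htr _]]] := Q_all 0 M.
split; [exact: (Htr _ _ _ HD H1 H2)|exact: (Htr _ _ _ H2 H1 HD)].
Qed.
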